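(* If $x=re^{i\theta}\in C$ and $M_x$ is minimal in the sphere $S^{n+1}(r)$, then $$\|A^E(x)\|^2=\frac{ng}{r^2},\qquad \|A^S(x)\|^2=\frac{n}{r^2}(g-1).$$
   Context: Let $M^n$ be a compact isoparametric hypersurface in the unit sphere $S^{n+1}\subset\mathbb{R}^{n+2}$ (constant principal curvatures) with $g$ distinct principal curvatures; then $g\in\{1,2,3,4,6\}$. Fix $x_0\in M$ and identify the 2-dimensional normal space $\nu_{x_0}M$ of $M$ in $\mathbb{R}^{n+2}$ with $\mathbb{C}$ so that the two focal submanifolds $M_+$, $M_-$ ($\dim M_+\le\dim M_-$) meet the normal circle at $1$ and $e^{i\pi/g}$ (the intersection points closest to $x_0$). The Weyl chamber is $C=\{re^{i\theta}:r>0,\ 0<\theta<\pi/g\}$. For $k=1,\dots,g$ let $\theta_k=k\pi/g-\pi/2$, $\alpha_k=e^{i\theta_k}$, and $m_k=m_1$ for $k$ odd, $m_k=m_2$ for $k$ even, where $(m_1,m_2)$, $m_1\le m_2$, is the multiplicity data of the principal curvatures; $m_1=m_2$ if $g$ is odd, and $(m_1+m_2)g=2n$. For $x\in C$, $M_x=\{p+\tilde\xi(p):p\in M\}$ where $\tilde\xi$ is the parallel normal field on $M$ with $\tilde\xi(x_0)=x-x_0$; it is an $n$-dimensional isoparametric submanifold of $\mathbb{R}^{n+2}$ lying in $S^{n+1}(|x|)$, with normal space $\nu_{x_0}M$ at $x$, and $T_xM_x=\oplus_kE_k$, $\dim E_k=m_k$, with Euclidean shape operator $A_\xi|_{E_k}=\langle\xi,-\alpha_k/\langle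 x,\alpha_k\rangle\rangle\mathrm{Id}$ ($\langle\cdot,\cdot\rangle$ the real inner product on $\mathbb{C}=\mathbb{R}^2$). $H^E(x),A^E(x)$ denote mean curvature vector and shape operator of $M_x$ at $x$ in $\mathbb{R}^{n+2}$; $H^S(x),A^S(x)$ those of $M_x$ as a hypersurface of $S^{n+1}(|x|)$; $\|A\|^2$ is the sum of squared Hilbert–Schmidt norms over an orthonormal normal basis. Set $\delta=(m_2-m_1)/(m_2+m_1)$ if $g\ge2$ and $\delta=0$ if $g=1$, and let $\theta_{\min}\in(0,\pi/g)$ be defined by $\cos g\theta_{\min}=-\delta$. *)

(* Defs.v *)
From Stdlib Require Import Reals List Arith.
Open Scope R_scope.

(* The normal plane nu_{x0} M identified with C = R^2. *)
Definition vec : Type := (R * R)%type.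
Definition inner (u v : vec) : R := fst u * fst v + snd u * snd v.
Definition vadd (u v : vec) : vec := (fst u + fst v, snd u + snd v).
Definition vscale (c : R) (u : vec) : vec := (c * fst u, c * snd u).
Definition vzero : vec := (0, 0).
(* multiplication by i *)
Definition rot (u : vec) : vec := (- snd u, fst u).
Definition polar (r t : R) : vec := (r * cos t, r * sin t).

Definition sumk (g : nat) (f : nat -> R) : R :=
  fold_right Rplus 0 (map f (seq 1 g)).
Definition vsumk (g : nat) (f : nat -> vec) : vec :=
  fold_right vadd vzero (map f (seq 1 g)).

Definition theta_k (g k : nat) : R := INR k * PI / INR g - PI / 2.
Definition alpha (g k : nat) : vec := polar 1 (theta_k g k).
Definition mk (m1 m2 k : nat) : nat := if Nat.odd k then m1 else m2.

Definition in_chamber (g : nat) (r theta : R) : Prop :=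
  0 < r /\ 0 < theta /\ theta < PI / INR g.

(* The curvature normal of E_k at x: A_xi|E_k = <xi, nk> Id,
   nk = - alpha_k / <x, alpha_k>. *)
Definition curv_normal (g : nat) (x : vec) (k : nat) : vec :=
  vscale (- / inner x (alpha g k)) (alpha g k).

Definition shape_eig (g : nat) (x : vec) (k : nat) (xi : vec) : R :=
  inner xi (curv_normal g x k).

(* Squared Hilbert-Schmidt norm of A_xi on T_x M_x = (+)_k E_k,
   dim E_k = m_k. *)
Definition HS_sq (g m1 m2 : nat) (x xi : vec) : R :=
  sumk g (fun k => INR (mk m1 m2 k) * (shape_eig g x k xi) ^ 2).

Definition orthonormal2 (e1 e2 : vec) : Prop :=
  inner e1 e1 = 1 /\ inner e2 e2 = 1 /\ inner e1 e2 = 0.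

Definition AE_norm_sq (g m1 m2 : nat) (x e1 e2 : vec) : R :=
  HS_sq g m1 m2 x e1 + HS_sq g m1 m2 x e2.

(* Euclidean mean curvature vector H^E(x) = (1/n) tr A, i.e. the vector
   with <H^E, xi> = (1/n) tr A_xi. *)
Definition HE (g m1 m2 n : nat) (x : vec) : vec :=
  vscale (/ INR n) (vsumk g (fun k => vscale (INR (mk m1 m2 k)) (curv_normal g x k))).

(* Mean curvature vector in the sphere S^{n+1}(|x|): the component of H^E
   tangent to the sphere, i.e. orthogonal to the position vector x. *)
Definition HS (g m1 m2 n : nat) (x : vec) : vec :=
  let h := HE g m1 m2 n x in
  vadd h (vscale (- (inner h x / inner x x)) x).

Definition minimal_in_sphere (g m1 m2 n : nat) (x : vec) : Prop :=
  HS g m1 m2 n x = vzero.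

(* Unit normal of M_x in S^{n+1}(|x|) at x: i x / |x|.  For normals tangent
   to the sphere the spherical shape operator equals the Euclidean one. *)
Definition sphere_normal (x : vec) : vec := vscale (/ sqrt (inner x x)) (rot x).

Definition AS_norm_sq (g m1 m2 : nat) (x : vec) : R :=
  HS_sq g m1 m2 x (sphere_normal x).

Definition iso_data (g m1 m2 n : nat) : Prop :=
  (g = 1 \/ g = 2 \/ g = 3 \/ g = 4 \/ g = 6)%nat /\
  (1 <= m1)%nat /\ (m1 <= m2)%nat /\
  (Nat.odd g = true -> m1 = m2) /\
  ((m1 + m2) * g = 2 * n)%nat.

(* Main.v *)
Require Import Defs.
From Stdlib Require Import Reals Lra Lia List.
Open Scope R_scope.

Lemma N2 (al : R) : sin al <> 0 -> sin (al + PI/2) <> 0 ->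
  cos al / sin al + cos (al + PI/2) / sin (al + PI/2) = 2 * cos (2*al) / sin (2*al) /\
  / sin al ^ 2 + / sin (al + PI/2) ^ 2 = 4 / sin (2*al) ^ 2.
Proof.
  rewrite sin_plus, cos_plus, sin_PI2, cos_PI2, sin_2a, cos_2a.
  set (a := cos al) in *. set (b := sin al) in *.
  intros Hb Ha.
  assert (Ha' : a <> 0) by (intro E; apply Ha; rewrite E; ring).
  assert (H1 : a^2 + b^2 = 1) by (unfold a, b; rewrite <- (sin2_cos2 al); unfold Rsqr; ring).
  split.
  - field. split; auto.
  - replace 4 with (4 * (a^2+b^2)) by (rewrite H1; ring). field. split; auto.
Qed.

Lemma N3 (al : R) : sin al <> 0 -> sin (al + PI/3) <> 0 -> sin (al + 2*(PI/3)) <> 0 ->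
  cos al / sin al + cos (al + PI/3) / sin (al + PI/3) + cos (al + 2*(PI/3)) / sin (al + 2*(PI/3))
    = 3 * cos (3*al) / sin (3*al) /\
  / sin al ^ 2 + / sin (al + PI/3) ^ 2 + / sin (al + 2*(PI/3)) ^ 2 = 9 / sin (3*al) ^ 2.
Proof.
  assert (E3 : 3 * al = 2 * al + al) by ring.
  rewrite E3, (sin_plus (2*al) al), (cos_plus (2*al) al), sin_2a, cos_2a.
  rewrite !sin_plus, !cos_plus, sin_PI3, cos_PI3, sin_2PI3, cos_2PI3.
  set (a := cos al) in *. set (b := sin al) in *. set (t := sqrt 3).
  assert (Ht : t^2 = 3) by (unfold t; simpl; rewrite Rmult_1_r; apply sqrt_sqrt; lra).
  assert (H1 : a^2 = 1 - b^2) by (unfold a, b; rewrite <- (sin2_cos2 al); unfold Rsqr; ring).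
  intros H0 HS1 HS2.
  set (S1 := b * (1/2) + a * (t/2)) in *.
  set (S2 := b * (-1/2) + a * (t/2)) in *.
  set (C1 := a * (1/2) - b * (t/2)) in *.
  set (C2 := a * (-1/2) - b * (t/2)) in *.
  assert (P : S1 * S2 = (3 - 4*b^2)/4).
  { unfold S1, S2. replace (3 - 4*b^2) with (3*a^2 - b^2) by (rewrite H1; ring).
    rewrite <- Ht. field. }
  assert (Q : C1 * S2 + C2 * S1 = - 2 * a * b).
  { unfold S1, S2, C1, C2. replace (-2*a*b) with (-(a*b*(1 + t^2)/2)) by (rewrite Ht; field).
    field. }
  assert (R2 : S1^2 + S2^2 = (3 - 2*b^2)/2).
  { unfold S1, S2. replace (3 - 2*b^2) with (b^2 + 3*a^2) by (rewrite H1; ring).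
    rewrite <- Ht. field. }
  assert (D : 3 - 4*b^2 <> 0).
  { intro E. assert (S1*S2 = 0) by (rewrite P, E; field).
    apply Rmult_integral in H. tauto. }
  assert (Haa : a * a = 1 - b^2) by (rewrite <- H1; ring).
  replace (2 * b * a * a + (a * a - b * b) * b) with (b * (3 - 4*b^2))
    by (replace (2 * b * a * a + (a * a - b * b) * b) with (b * (3*(a*a) - b*b)) by ring;
        rewrite Haa; ring).
  replace ((a * a - b * b) * a - 2 * b * a * b) with (a * (1 - 4*b^2))
    by (replace ((a * a - b * b) * a - 2 * b * a * b) with (a * (a*a - 3*(b*b))) by ring;
        rewrite Haa; ring).
  split.
  - replace (a / b + C1 / S1 + C2 / S2) with (a / b + (C1 * S2 + C2 * S1) / (S1 * S2)) by (field; auto).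
    rewrite P, Q. field. split; auto.
  - replace (/ b ^ 2 + / S1 ^ 2 + / S2 ^ 2) with (/ b ^ 2 + (S1^2 + S2^2) / (S1 * S2)^2) by (field; auto).
    rewrite P, R2. field. split; auto.
Qed.
Definition phi (g:nat) (t:R) (k:nat) := INR k * PI / INR g - t.

Lemma phi_pos g t k : (1<=g)%nat -> 0 < t -> t < PI/INR g -> (1<=k<=g)%nat -> 0 < sin (phi g t k).
Proof.
  intros Hg Ht Htg Hk. apply sin_gt_0; unfold phi.
  - assert (G : 0 < INR g) by (apply lt_0_INR; lia).
    assert (K1 : 1 <= INR k) by (replace 1 with (INR 1) by reflexivity; apply le_INR; lia).
    set (u := PI / INR g) in *.
    replace (INR k * PI / INR g) with (INR k * u) by (unfold u; field; lra).
    nra.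
  - assert (G : 0 < INR g) by (apply lt_0_INR; lia).
    assert (K1 : INR k <= INR g) by (apply le_INR; lia).
    set (u := PI / INR g) in *.
    replace (INR k * PI / INR g) with (INR k * u) by (unfold u; field; lra).
    replace PI with (INR g * u) by (unfold u; field; lra).
    nra.
Qed.

Lemma final_even (M1 M2 h p q : R) : 0<M1 -> 0<M2 -> 0<h -> 0<p -> 0<q -> p^2+q^2=1 ->
  M1*(h*p/q) + M2*(h*(-q)/p) = 0 -> M1*(h^2/q^2) + M2*(h^2/p^2) = (M1+M2)*h*(2*h).
Proof.
  intros H1 H2 Hh Hp Hq Hpq E.
  assert (E2 : M1*p^2 = M2*q^2).
  { assert (X : M1*(h*p/q) + M2*(h*(-q)/p) = h*(M1*p^2 - M2*q^2)/(p*q)) by (field; lra).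
    rewrite X in E. assert (h*(M1*p^2 - M2*q^2) = 0).
    { apply (Rmult_eq_reg_r (/(p*q))). rewrite Rmult_0_l. exact E.
      apply Rinv_neq_0_compat. nra. }
    apply Rmult_integral in H. destruct H; lra. }
  assert (E3 : M2 = M1*p^2/q^2) by (rewrite E2; field; lra).
  rewrite E3.
  replace (M1 + M1*p^2/q^2) with (M1*(p^2+q^2)/q^2) by (field; lra).
  rewrite Hpq. field. lra.
Qed.

Lemma cos_PImx x : cos (PI - x) = - cos x.
Proof. rewrite cos_minus, cos_PI, sin_PI. ring. Qed.

Lemma core6 m1 m2 n t : (1 <= m1)%nat -> (m1 <= m2)%nat -> ((m1+m2)*6 = 2*n)%nat ->
  0 < t -> t < PI / INR 6 ->
  sumk 6 (fun k => INR (mk m1 m2 k) * (cos (phi 6 t k) / sin (phi 6 t k))) = 0 ->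
  sumk 6 (fun k => INR (mk m1 m2 k) * / sin (phi 6 t k) ^ 2) = INR n * INR 6 /\
  sumk 6 (fun k => INR (mk m1 m2 k)) = INR n.
Proof.
  intros Hm1 Hm12 Hn Ht Htg Hmin.
  assert (Pk : forall k, (1<=k<=6)%nat -> 0 < sin (phi 6 t k)) by (intros; apply phi_pos; auto; lia).
  assert (P1 := Pk 1%nat ltac:(lia)). assert (P2 := Pk 2%nat ltac:(lia)).
  assert (P3 := Pk 3%nat ltac:(lia)). assert (P4 := Pk 4%nat ltac:(lia)).
  assert (P5 := Pk 5%nat ltac:(lia)). assert (P6 := Pk 6%nat ltac:(lia)).
  assert (Nr : (INR m1 + INR m2) * 6 = 2 * INR n).
  { apply (f_equal INR) in Hn. rewrite mult_INR, plus_INR, mult_INR in Hn. simpl in Hn. lra. }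
  assert (M1 : 1 <= INR m1) by (replace 1 with (INR 1) by reflexivity; apply le_INR; lia).
  assert (M2 : INR m1 <= INR m2) by (apply le_INR; lia).
  replace (INR 6) with 6 in * by (simpl; ring).
  unfold sumk in *; cbn [seq map fold_right mk Nat.odd Nat.even negb] in *.
  set (al := PI/6 - t). set (be := PI/3 - t).
  assert (E1 : phi 6 t 1 = al) by (unfold phi, al; simpl; field).
  assert (E3 : phi 6 t 3 = al + PI/3) by (unfold phi, al; simpl; field).
  assert (E5 : phi 6 t 5 = al + 2*(PI/3)) by (unfold phi, al; simpl; field).
  assert (E2 : phi 6 t 2 = be) by (unfold phi, be; simpl; field).
  assert (E4 : phi 6 t 4 = be + PI/3) by (unfold phi, be; simpl; field).
  assert (E6 : phi 6 t 6 = be + 2*(PI/3)) by (unfold phi, be; simpl; field).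
  rewrite E1, E2, E3, E4, E5, E6 in *.
  destruct (N3 al ltac:(lra) ltac:(lra) ltac:(lra)) as [A1 A2].
  destruct (N3 be ltac:(lra) ltac:(lra) ltac:(lra)) as [B1 B2].
  assert (Sa : 3*al = PI/2 - 3*t) by (unfold al; field).
  assert (Sb : 3*be = PI - 3*t) by (unfold be; field).
  rewrite Sa in A1, A2. rewrite cos_shift in A1. rewrite sin_shift in A1, A2.
  rewrite Sb in B1, B2. rewrite cos_PImx in B1. rewrite sin_PI_x in B1, B2.
  assert (p0 : 0 < sin (3*t)) by (apply sin_gt_0; lra).
  assert (q0 : 0 < cos (3*t)) by (apply cos_gt_0; lra).
  assert (pq : sin (3*t)^2 + cos (3*t)^2 = 1) by (rewrite <- (sin2_cos2 (3*t)); unfold Rsqr; ring).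
  split.
  - assert (H := final_even (INR m1) (INR m2) 3 (sin (3*t)) (cos (3*t)) ltac:(lra) ltac:(lra) ltac:(lra) p0 q0 pq).
    assert (Hm : INR m1 * (cos al / sin al + cos (al + PI/3) / sin (al + PI/3) + cos (al + 2*(PI/3)) / sin (al + 2*(PI/3)))
      + INR m2 * (cos be / sin be + cos (be + PI/3) / sin (be + PI/3) + cos (be + 2*(PI/3)) / sin (be + 2*(PI/3))) = 0)
      by (rewrite <- Hmin; ring).
    rewrite A1, B1 in Hm. specialize (H Hm).
    transitivity (INR m1 * (/ sin al ^ 2 + / sin (al + PI/3) ^ 2 + / sin (al + 2*(PI/3)) ^ 2)
      + INR m2 * (/ sin be ^ 2 + / sin (be + PI/3) ^ 2 + / sin (be + 2*(PI/3)) ^ 2)); [ring|].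
    rewrite A2, B2. replace 9 with (3^2) by ring. rewrite H. lra.
  - lra.
Qed.

Lemma core4 m1 m2 n t : (1 <= m1)%nat -> (m1 <= m2)%nat -> ((m1+m2)*4 = 2*n)%nat ->
  0 < t -> t < PI / INR 4 ->
  sumk 4 (fun k => INR (mk m1 m2 k) * (cos (phi 4 t k) / sin (phi 4 t k))) = 0 ->
  sumk 4 (fun k => INR (mk m1 m2 k) * / sin (phi 4 t k) ^ 2) = INR n * INR 4 /\
  sumk 4 (fun k => INR (mk m1 m2 k)) = INR n.
Proof.
  intros Hm1 Hm12 Hn Ht Htg Hmin.
  assert (Pk : forall k, (1<=k<=4)%nat -> 0 < sin (phi 4 t k)) by (intros; apply phi_pos; auto; lia).
  assert (P1 := Pk 1%nat ltac:(lia)). assert (P2 := Pk 2%nat ltac:(lia)).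
  assert (P3 := Pk 3%nat ltac:(lia)). assert (P4 := Pk 4%nat ltac:(lia)).
  assert (Nr : (INR m1 + INR m2) * 4 = 2 * INR n).
  { apply (f_equal INR) in Hn. rewrite mult_INR, plus_INR, mult_INR in Hn. simpl in Hn. lra. }
  assert (M1 : 1 <= INR m1) by (replace 1 with (INR 1) by reflexivity; apply le_INR; lia).
  assert (M2 : INR m1 <= INR m2) by (apply le_INR; lia).
  replace (INR 4) with 4 in * by (simpl; ring).
  unfold sumk in *; cbn [seq map fold_right mk Nat.odd Nat.even negb] in *.
  set (al := PI/4 - t). set (be := PI/2 - t).
  assert (E1 : phi 4 t 1 = al) by (unfold phi, al; simpl; field).
  assert (E3 : phi 4 t 3 = al + PI/2) by (unfold phi, al; simpl; field).
  assert (E2 : phi 4 t 2 = be) by (unfold phi, be; simpl; field).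
  assert (E4 : phi 4 t 4 = be + PI/2) by (unfold phi, be; simpl; field).
  rewrite E1, E2, E3, E4 in *.
  destruct (N2 al ltac:(lra) ltac:(lra)) as [A1 A2].
  destruct (N2 be ltac:(lra) ltac:(lra)) as [B1 B2].
  assert (Sa : 2*al = PI/2 - 2*t) by (unfold al; field).
  assert (Sb : 2*be = PI - 2*t) by (unfold be; field).
  rewrite Sa in A1, A2. rewrite cos_shift in A1. rewrite sin_shift in A1, A2.
  rewrite Sb in B1, B2. rewrite cos_PImx in B1. rewrite sin_PI_x in B1, B2.
  assert (p0 : 0 < sin (2*t)) by (apply sin_gt_0; lra).
  assert (q0 : 0 < cos (2*t)) by (apply cos_gt_0; lra).
  assert (pq : sin (2*t)^2 + cos (2*t)^2 = 1) by (rewrite <- (sin2_cos2 (2*t)); unfold Rsqr; ring).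
  split.
  - assert (H := final_even (INR m1) (INR m2) 2 (sin (2*t)) (cos (2*t)) ltac:(lra) ltac:(lra) ltac:(lra) p0 q0 pq).
    assert (Hm : INR m1 * (cos al / sin al + cos (al + PI/2) / sin (al + PI/2))
      + INR m2 * (cos be / sin be + cos (be + PI/2) / sin (be + PI/2)) = 0)
      by (rewrite <- Hmin; ring).
    rewrite A1, B1 in Hm. specialize (H Hm).
    transitivity (INR m1 * (/ sin al ^ 2 + / sin (al + PI/2) ^ 2)
      + INR m2 * (/ sin be ^ 2 + / sin (be + PI/2) ^ 2)); [ring|].
    rewrite A2, B2. replace 4 with (2^2) by ring. rewrite H. lra.
  - lra.
Qed.

Lemma core2 m1 m2 n t : (1 <= m1)%nat -> (m1 <= m2)%nat -> ((m1+m2)*2 = 2*n)%nat ->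
  0 < t -> t < PI / INR 2 ->
  sumk 2 (fun k => INR (mk m1 m2 k) * (cos (phi 2 t k) / sin (phi 2 t k))) = 0 ->
  sumk 2 (fun k => INR (mk m1 m2 k) * / sin (phi 2 t k) ^ 2) = INR n * INR 2 /\
  sumk 2 (fun k => INR (mk m1 m2 k)) = INR n.
Proof.
  intros Hm1 Hm12 Hn Ht Htg Hmin.
  assert (Nr : (INR m1 + INR m2) * 2 = 2 * INR n).
  { apply (f_equal INR) in Hn. rewrite mult_INR, plus_INR, mult_INR in Hn. simpl in Hn. lra. }
  assert (M1 : 1 <= INR m1) by (replace 1 with (INR 1) by reflexivity; apply le_INR; lia).
  assert (M2 : INR m1 <= INR m2) by (apply le_INR; lia).
  replace (INR 2) with 2 in * by (simpl; ring).
  unfold sumk in *; cbn [seq map fold_right mk Nat.odd Nat.even negb] in *.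
  assert (E1 : phi 2 t 1 = PI/2 - t) by (unfold phi; simpl; field).
  assert (E2 : phi 2 t 2 = PI - t) by (unfold phi; simpl; field).
  rewrite E1, E2 in *. rewrite cos_shift, sin_shift, cos_PImx, sin_PI_x in *.
  assert (p0 : 0 < sin t) by (apply sin_gt_0; lra).
  assert (q0 : 0 < cos t) by (apply cos_gt_0; lra).
  assert (pq : sin t^2 + cos t^2 = 1) by (rewrite <- (sin2_cos2 t); unfold Rsqr; ring).
  split.
  - assert (H := final_even (INR m1) (INR m2) 1 (sin t) (cos t) ltac:(lra) ltac:(lra) ltac:(lra) p0 q0 pq).
    assert (Hm : INR m1 * (1 * sin t / cos t) + INR m2 * (1 * - cos t / sin t) = 0)
      by (rewrite <- Hmin; field; lra).
    specialize (H Hm).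
    transitivity (INR m1 * (1^2 / cos t ^ 2) + INR m2 * (1^2 / sin t ^2)); [field; lra|].
    rewrite H. lra.
  - lra.
Qed.

Lemma core3 m1 m2 n t : (1 <= m1)%nat -> m1 = m2 -> ((m1+m2)*3 = 2*n)%nat ->
  0 < t -> t < PI / INR 3 ->
  sumk 3 (fun k => INR (mk m1 m2 k) * (cos (phi 3 t k) / sin (phi 3 t k))) = 0 ->
  sumk 3 (fun k => INR (mk m1 m2 k) * / sin (phi 3 t k) ^ 2) = INR n * INR 3 /\
  sumk 3 (fun k => INR (mk m1 m2 k)) = INR n.
Proof.
  intros Hm1 Hm12 Hn Ht Htg Hmin. subst m2.
  assert (Pk : forall k, (1<=k<=3)%nat -> 0 < sin (phi 3 t k)) by (intros; apply phi_pos; auto; lia).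
  assert (P1 := Pk 1%nat ltac:(lia)). assert (P2 := Pk 2%nat ltac:(lia)).
  assert (P3 := Pk 3%nat ltac:(lia)).
  assert (Nr : (INR m1 + INR m1) * 3 = 2 * INR n).
  { apply (f_equal INR) in Hn. rewrite mult_INR, plus_INR, mult_INR in Hn. simpl in Hn. lra. }
  assert (M1 : 1 <= INR m1) by (replace 1 with (INR 1) by reflexivity; apply le_INR; lia).
  replace (INR 3) with 3 in * by (simpl; ring).
  unfold sumk in *; cbn [seq map fold_right mk Nat.odd Nat.even negb] in *.
  set (al := PI/3 - t).
  assert (E1 : phi 3 t 1 = al) by (unfold phi, al; simpl; field).
  assert (E2 : phi 3 t 2 = al + PI/3) by (unfold phi, al; simpl; field).
  assert (E3 : phi 3 t 3 = al + 2*(PI/3)) by (unfold phi, al; simpl; field).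
  rewrite E1, E2, E3 in *.
  destruct (N3 al ltac:(lra) ltac:(lra) ltac:(lra)) as [A1 A2].
  assert (Sa : 3*al = PI - 3*t) by (unfold al; field).
  rewrite Sa in A1, A2. rewrite cos_PImx in A1. rewrite sin_PI_x in A1, A2.
  assert (p0 : 0 < sin (3*t)) by (apply sin_gt_0; lra).
  assert (pq : sin (3*t)^2 + cos (3*t)^2 = 1) by (rewrite <- (sin2_cos2 (3*t)); unfold Rsqr; ring).
  assert (Hm : INR m1 * (cos al / sin al + cos (al + PI/3) / sin (al + PI/3) + cos (al + 2*(PI/3)) / sin (al + 2*(PI/3))) = 0)
      by (rewrite <- Hmin; ring).
  rewrite A1 in Hm.
  assert (C0 : cos (3*t) = 0).
  { apply Rmult_integral in Hm. destruct Hm as [Hm|Hm]; [lra|].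
    assert (X : 3 * - cos (3*t) = 0).
    { replace (3 * - cos (3*t)) with (3 * - cos (3 * t) / sin (3 * t) * sin (3*t)) by (field; lra).
      rewrite Hm. ring. }
    lra. }
  assert (S1 : sin (3*t)^2 = 1) by (rewrite C0 in pq; lra).
  split.
  - transitivity (INR m1 * (/ sin al ^ 2 + / sin (al + PI/3) ^ 2 + / sin (al + 2*(PI/3)) ^ 2)); [ring|].
    rewrite A2, S1. lra.
  - lra.
Qed.

Lemma core1 m1 m2 n t : (1 <= m1)%nat -> m1 = m2 -> ((m1+m2)*1 = 2*n)%nat ->
  0 < t -> t < PI / INR 1 ->
  sumk 1 (fun k => INR (mk m1 m2 k) * (cos (phi 1 t k) / sin (phi 1 t k))) = 0 ->
  sumk 1 (fun k => INR (mk m1 m2 k) * / sin (phi 1 t k) ^ 2) = INR n * INR 1 /\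
  sumk 1 (fun k => INR (mk m1 m2 k)) = INR n.
Proof.
  intros Hm1 Hm12 Hn Ht Htg Hmin. subst m2.
  assert (Nr : (INR m1 + INR m1) * 1 = 2 * INR n).
  { apply (f_equal INR) in Hn. rewrite mult_INR, plus_INR, mult_INR in Hn. simpl in Hn. lra. }
  assert (M1 : 1 <= INR m1) by (replace 1 with (INR 1) by reflexivity; apply le_INR; lia).
  replace (INR 1) with 1 in * by reflexivity.
  unfold sumk in *; cbn [seq map fold_right mk Nat.odd Nat.even negb] in *.
  assert (E1 : phi 1 t 1 = PI - t) by (unfold phi; simpl; field).
  rewrite E1 in *. rewrite cos_PImx, sin_PI_x in *.
  assert (p0 : 0 < sin t) by (apply sin_gt_0; lra).
  assert (pq : sin t^2 + cos t^2 = 1) by (rewrite <- (sin2_cos2 t); unfold Rsqr; ring).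
  assert (C0 : cos t = 0).
  { rewrite Rplus_0_r in Hmin. apply Rmult_integral in Hmin. destruct Hmin as [Hm|Hm]; [lra|].
    replace (cos t) with (- (- cos t / sin t) * sin t) by (field; lra). rewrite Hm. ring. }
  assert (S1 : sin t^2 = 1) by (rewrite C0 in pq; lra).
  split.
  - rewrite S1. lra.
  - lra.
Qed.

Lemma core g m1 m2 n t : iso_data g m1 m2 n -> 0 < t -> t < PI / INR g ->
  sumk g (fun k => INR (mk m1 m2 k) * (cos (phi g t k) / sin (phi g t k))) = 0 ->
  sumk g (fun k => INR (mk m1 m2 k) * / sin (phi g t k) ^ 2) = INR n * INR g /\
  sumk g (fun k => INR (mk m1 m2 k)) = INR n.
Proof.
  intros [Hg [Hm1 [Hm12 [Hodd Hn]]]] Ht Htg.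
  destruct Hg as [->|[->|[->|[->| ->]]]].
  - apply core1; auto.
  - apply core2; auto.
  - apply core3; auto.
  - apply core4; auto.
  - apply core6; auto.
Qed.

Lemma fr_plus (l : list nat) f h : fold_right Rplus 0 (map f l) + fold_right Rplus 0 (map h l)
  = fold_right Rplus 0 (map (fun k => f k + h k) l).
Proof. induction l; simpl; [ring | rewrite <- IHl; ring]. Qed.
Lemma fr_scal (l : list nat) c f : c * fold_right Rplus 0 (map f l)
  = fold_right Rplus 0 (map (fun k => c * f k) l).
Proof. induction l; simpl; [ring | rewrite <- IHl; ring]. Qed.
Lemma fr_ext (l : list nat) f h : (forall k, In k l -> f k = h k) ->
  fold_right Rplus 0 (map f l) = fold_right Rplus 0 (map h l).
Proof. induction l; simpl; intros H; [reflexivity|]. rewrite H, IHl; auto. Qed.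
Lemma fr_inner (l : list nat) F v : inner (fold_right vadd vzero (map F l)) v
  = fold_right Rplus 0 (map (fun k => inner (F k) v) l).
Proof. induction l; simpl; [unfold inner, vzero; simpl; ring | rewrite <- IHl; unfold inner, vadd; simpl; ring]. Qed.

Lemma sumk_ext_in g f h : (forall k, (1 <= k <= g)%nat -> f k = h k) -> sumk g f = sumk g h.
Proof. intros H. unfold sumk. apply fr_ext. intros k Hk. apply in_seq in Hk. apply H. lia. Qed.

Lemma inner_vscale_r u c v : inner u (vscale c v) = c * inner u v.
Proof. unfold inner, vscale; simpl; ring. Qed.
Lemma inner_vscale_l u c v : inner (vscale c u) v = c * inner u v.
Proof. unfold inner, vscale; simpl; ring. Qed.
Lemma inner_comm u v : inner u v = inner v u.
Proof. unfold inner; ring. Qed.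

Lemma parseval e1 e2 v : orthonormal2 e1 e2 -> inner e1 v ^ 2 + inner e2 v ^ 2 = inner v v.
Proof.
  destruct e1 as [a b], e2 as [c d], v as [v1 v2]. unfold orthonormal2, inner; simpl.
  intros [H1 [H2 H3]].
  assert (Ha : a^2 = d^2).
  { assert (a^2*(c^2+d^2) - d^2*(a^2+b^2) = (a*c - b*d)*(a*c+b*d)) by ring.
    replace (c*c+d*d) with (c^2+d^2) in H2 by ring. replace (a*a+b*b) with (a^2+b^2) in H1 by ring.
    rewrite H1, H2, H3 in H. lra. }
  assert (Hb : b^2 = c^2).
  { assert (b^2*(c^2+d^2) - c^2*(a^2+b^2) = -((a*c - b*d)*(a*c+b*d))) by ring.
    replace (c*c+d*d) with (c^2+d^2) in H2 by ring. replace (a*a+b*b) with (a^2+b^2) in H1 by ring.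
    rewrite H1, H2, H3 in H. lra. }
  assert (Hab : a*b + c*d = 0).
  { assert (E : (a*b+c*d)^2 = a^2*b^2 + c^2*d^2 + 2*(a*c)*(b*d)) by ring.
    replace (a*c) with (-(b*d)) in E by lra.
    assert (E' : (a*b+c*d)^2 = a^2*b^2 + c^2*d^2 - 2*b^2*d^2) by (rewrite E; ring).
    rewrite Ha, Hb in E'.
    assert (E'' : (a*b+c*d)^2 = 0) by (rewrite E'; ring). nra. }
  assert (Hac : a^2 + c^2 = 1) by lra.
  assert (Hbd : b^2 + d^2 = 1) by lra.
  transitivity ((a^2+c^2)*v1^2 + 2*(a*b+c*d)*v1*v2 + (b^2+d^2)*v2^2); [ring|].
  rewrite Hac, Hbd, Hab. ring.
Qed.

Theorem corollary4p8 (g m1 m2 n : nat) (r theta : R) :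
  iso_data g m1 m2 n ->
  in_chamber g r theta ->
  minimal_in_sphere g m1 m2 n (polar r theta) ->
  (forall e1 e2 : vec, orthonormal2 e1 e2 ->
     AE_norm_sq g m1 m2 (polar r theta) e1 e2 = INR n * INR g / r ^ 2) /\
  AS_norm_sq g m1 m2 (polar r theta) = INR n / r ^ 2 * (INR g - 1).
Proof.
  intros Hiso [Hr [Ht Htg]] Hmin.
  assert (Hg1 : (1 <= g)%nat) by (destruct Hiso as [Hg _]; lia).
  assert (Hn0 : 0 < INR n).
  { destruct Hiso as [Hg [Hm1 [_ [_ Hn]]]]. apply lt_0_INR. nia. }
  set (x := polar r theta) in *.
  assert (Pk : forall k, (1<=k<=g)%nat -> 0 < sin (phi g theta k)) by (intros; apply phi_pos; auto).
  assert (L1 : forall k, inner x (alpha g k) = r * sin (phi g theta k)).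
  { intros k. unfold x, inner, polar, alpha, theta_k, phi; simpl.
    set (y := INR k * PI / INR g).
    rewrite (cos_minus y (PI/2)), (sin_minus y (PI/2)), (sin_minus y theta), cos_PI2, sin_PI2. ring. }
  assert (L2 : forall k, inner (rot x) (alpha g k) = - r * cos (phi g theta k)).
  { intros k. unfold x, rot, inner, polar, alpha, theta_k, phi; simpl.
    set (y := INR k * PI / INR g).
    rewrite (cos_minus y (PI/2)), (sin_minus y (PI/2)), (cos_minus y theta), cos_PI2, sin_PI2. ring. }
  assert (L3 : forall k, inner (alpha g k) (alpha g k) = 1).
  { intros k. unfold inner, alpha, polar; cbn [fst snd]. pose proof (sin2_cos2 (theta_k g k)) as Hq. unfold Rsqr in Hq. nra. }
  assert (Lx : sqrt (inner x x) = r).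
  { replace (inner x x) with (r^2). apply sqrt_pow2; lra.
    unfold x, inner, polar; simpl. rewrite <- (sin2_cos2 theta). unfold Rsqr. ring. }
  assert (HM : sumk g (fun k => INR (mk m1 m2 k) * (cos (phi g theta k) / sin (phi g theta k))) = 0).
  { apply (f_equal (fun v => inner v (rot x))) in Hmin.
    unfold HS in Hmin. unfold vadd at 1 in Hmin.
    replace (inner vzero (rot x)) with 0 in Hmin by (unfold inner, vzero; simpl; ring).
    set (h := HE g m1 m2 n x) in *.
    assert (Hh : inner h (rot x) = 0).
    { rewrite <- Hmin. unfold inner, vscale, rot, x, polar; simpl. ring. }
    unfold h, HE in Hh. rewrite inner_vscale_l in Hh. unfold vsumk in Hh. rewrite fr_inner in Hh.
    assert (Hs : fold_right Rplus 0 (map (fun k => inner (vscale (INR (mk m1 m2 k)) (curv_normal g x k)) (rot x)) (seq 1 g)) = 0).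
    { apply Rmult_integral in Hh. destruct Hh as [Hh|Hh]; auto.
      exfalso. apply (Rinv_neq_0_compat (INR n)); lra. }
    rewrite <- Hs. apply sumk_ext_in. intros k Hk. specialize (Pk k Hk).
    rewrite inner_vscale_l. unfold curv_normal. rewrite inner_vscale_l. rewrite (inner_comm (alpha g k)), L2, L1. field. lra. }
  destruct (core g m1 m2 n theta Hiso Ht Htg HM) as [C1 C2].
  split.
  - intros e1 e2 Ho. unfold AE_norm_sq, HS_sq, sumk. rewrite fr_plus.
    transitivity (/ r^2 * sumk g (fun k => INR (mk m1 m2 k) * / sin (phi g theta k) ^ 2)).
    + unfold sumk. rewrite fr_scal. apply fr_ext. intros k Hk. apply in_seq in Hk.
      assert (P := Pk k ltac:(lia)).
      unfold shape_eig, curv_normal. rewrite !inner_vscale_r, L1.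
      transitivity (INR (mk m1 m2 k) * (/ (r * sin (phi g theta k)))^2 * (inner e1 (alpha g k) ^ 2 + inner e2 (alpha g k) ^ 2)); [ring|].
      rewrite parseval, L3 by exact Ho. field. lra.
    + rewrite C1. field. lra.
  - unfold AS_norm_sq, HS_sq.
    transitivity (/ r^2 * sumk g (fun k => INR (mk m1 m2 k) * / sin (phi g theta k) ^ 2)
       + (- / r^2) * sumk g (fun k => INR (mk m1 m2 k))).
    + unfold sumk. rewrite !fr_scal, fr_plus. apply fr_ext. intros k Hk. apply in_seq in Hk.
      assert (P := Pk k ltac:(lia)).
      unfold shape_eig, curv_normal, sphere_normal. rewrite !inner_vscale_r, inner_vscale_l, Lx, L1.
      rewrite L2.
      assert (CS : cos (phi g theta k) ^ 2 = 1 - sin (phi g theta k) ^ 2)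
        by (rewrite <- (sin2_cos2 (phi g theta k)); unfold Rsqr; ring).
      transitivity (INR (mk m1 m2 k) * (/ (r * sin (phi g theta k)))^2 * (cos (phi g theta k))^2); [field; lra|].
      rewrite CS. field. lra.
    + rewrite C1, C2. field. lra.
Qed.
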